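(* Let $n\ge3$ and $k$ an odd integer with $3\le k\le n$. Then $\chi(\mathfrak{g}_{n,k})=n-k+1$.
   Context: $\mathfrak{g}_{n,k}$ is the Lie algebra over a field $K$ of characteristic zero with basis $e_1,\dots,e_n$ whose only nonzero brackets between basis vectors (up to antisymmetry) are $[e_1,e_i]=e_{i+1}$ for $2\le i\le n-1$ and $[e_i,e_{k-i}]=(-1)^ie_n$ for $2\le i\le k-2$. For a Lie algebra $\mathfrak{h}$ and $\ell\in\mathfrak{h}^*$, $\mathfrak{h}(\ell)=\{y\in\mathfrak{h}\mid\ell([x,y])=0\ \forall x\in\mathfrak{h}\}$ and the index is $\chi(\mathfrak{h})=\min_{\ell\in\mathfrak{h}^*}\dim\mathfrak{h}(\ell)$. *)

(* Defs.v *)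
From HB Require Import structures.
From mathcomp Require Import all_boot all_order all_algebra.
From mathcomp Require Import ring.
Set Implicit Arguments. Unset Strict Implicit. Unset Printing Implicit Defensive.
Import Order.TTheory GRing.Theory Num.Theory.
Local Open Scope ring_scope.

(* Vectors of the n-dimensional Lie algebra are row vectors 'rV[K]_n;
   the basis vector e_(i+1) (paper, 1-based) is  basis i  for i : 'I_n. *)
Definition basis (K : fieldType) (n : nat) (i : 'I_n) : 'rV[K]_n := delta_mx 0 i.

(* Structure constants of g_{n,k}, 1-based indices as in the paper:
   gnk_coef n k i j l = coefficient of e_l in [e_i, e_j].
   Nonzero brackets: [e_1,e_j] = e_(j+1) (2 <= j <= n-1), its antisymmetric
   counterpart [e_i,e_1] = - e_(i+1), and [e_i,e_(k-i)] = (-1)^i e_n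
   (2 <= i <= k-2); for odd k the latter family is itself antisymmetric. *)
Definition gnk_coef (K : fieldType) (n k : nat) (i j l : nat) : K :=
  ((i == 1%N) && (2 <= j <= n.-1)%N && (l == j.+1))%:R
  - ((j == 1%N) && (2 <= i <= n.-1)%N && (l == i.+1))%:R
  + ((2 <= i <= k - 2)%N && (i + j == k)%N && (l == n))%:R * (-1) ^+ i.

Definition gnk_bracket (K : fieldType) (n k : nat) (x y : 'rV[K]_n) : 'rV[K]_n :=
  \row_(l < n) \sum_(i < n) \sum_(j < n)
     x 0 i * y 0 j * gnk_coef K n k i.+1 j.+1 l.+1.

Definition lform (K : fieldType) (n : nat) (f : 'rV[K]_n) (v : 'rV[K]_n) : K :=
  \sum_(i < n) f 0 i * v 0 i.

(* h(f) = { y | f([x,y]) = 0 for all x }, represented (mxalgebra style) as a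
   square matrix whose row space is exactly that subspace: the row kernel of
   the matrix M with M j i = f([e_i, e_j]). *)
Definition stab_mx (K : fieldType) (n : nat)
    (br : 'rV[K]_n -> 'rV[K]_n -> 'rV[K]_n) (f : 'rV[K]_n) : 'M[K]_n :=
  kermx (\matrix_(j < n, i < n) lform f (br (basis K i) (basis K j))).

Definition stab_dim (K : fieldType) (n : nat)
    (br : 'rV[K]_n -> 'rV[K]_n -> 'rV[K]_n) (f : 'rV[K]_n) : nat :=
  \rank (stab_mx br f).

Definition lie_index_is (K : fieldType) (n : nat)
    (br : 'rV[K]_n -> 'rV[K]_n -> 'rV[K]_n) (m : nat) : Prop :=
  (exists f : 'rV[K]_n, stab_dim br f = m) /\
  (forall f : 'rV[K]_n, (m <= stab_dim br f)%N).

Lemma lform_gnk_expand (K : fieldType) n k (f x y : 'rV[K]_n) :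
  lform f (@gnk_bracket K n k x y) =
  \sum_(i < n) \sum_(j < n) x 0 i * y 0 j *
      lform f (@gnk_bracket K n k (basis K i) (basis K j)).
Proof.
have E (i j : 'I_n) : lform f (@gnk_bracket K n k (basis K i) (basis K j)) =
    \sum_(l < n) f 0 l * gnk_coef K n k i.+1 j.+1 l.+1.
  apply: eq_bigr => l _; rewrite mxE; congr (_ * _).
  rewrite (bigD1 i) //= [X in _ + X]big1 => [|i' ne]; last first.
    by rewrite big1 // => j' _; rewrite !mxE (negbTE ne) andbF !mul0r.
  rewrite addr0 (bigD1 j) //= [X in _ + X]big1 => [|j' ne]; last first.
    by rewrite !mxE (negbTE ne) andbF mulr0 mul0r.
  by rewrite !mxE !eqxx /= !mul1r !addr0.
rewrite /lform in E *.
under eq_bigr => l _ do rewrite mxE mulr_sumr.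
rewrite exchange_big /=; apply: eq_bigr => i _.
under eq_bigr => l _ do rewrite mulr_sumr.
rewrite exchange_big /=.
under [RHS]eq_bigr => j _ do rewrite E mulr_sumr.
by apply: eq_bigr => j _; apply: eq_bigr => l _; ring.
Qed.

Lemma stab_mx_gnkP (K : fieldType) n k (f y : 'rV[K]_n) :
  reflect (forall x, lform f (@gnk_bracket K n k x y) = 0)
          (y <= stab_mx (@gnk_bracket K n k) f)%MS.
Proof.
apply: (iffP sub_kermxP) => [H x | H].
  rewrite lform_gnk_expand big1 // => i _.
  have := congr1 (fun M : 'rV[K]_n => M 0 i) H.
  rewrite !mxE => Hi.
  transitivity (x 0 i * 0); last by rewrite mulr0.
  rewrite -[in RHS]Hi mulr_sumr.
  by under [RHS]eq_bigr => j _ do rewrite !mxE mulrA.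
apply/rowP => i; rewrite !mxE.
have := H (basis K i); rewrite lform_gnk_expand (bigD1 i) //= [X in _ + X]big1 => [|i' ne]; last first.
  by rewrite big1 // => j _; rewrite !mxE (negbTE ne) andbF !mul0r.
rewrite addr0 => Hx; rewrite -[RHS]Hx.
under [RHS]eq_bigr => j _ do rewrite !mxE !eqxx mul1r.
by under eq_bigr => j _ do rewrite !mxE.
Qed.

(* Main.v *)
Require Import Defs.
From HB Require Import structures.
From mathcomp Require Import all_boot all_order all_algebra zify.
Import Order.TTheory GRing.Theory Num.Theory.
Local Open Scope ring_scope.
Set Implicit Arguments. Unset Strict Implicit.
Definition Mf (K : fieldType) n k (f : 'rV[K]_n) : 'M[K]_n :=
  \matrix_(j < n, i < n) lform f (@gnk_bracket K n k (basis K i) (basis K j)).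

Lemma MfE (K : fieldType) n k (f : 'rV[K]_n) (i j : 'I_n) :
  Mf k f j i = \sum_(l < n) f 0 l * gnk_coef K n k i.+1 j.+1 l.+1.
Proof.
rewrite mxE; apply: eq_bigr => l _; rewrite mxE; congr (_ * _).
rewrite (bigD1 i) //= [X in _ + X]big1 => [|i' ne]; last first.
  by rewrite big1 // => j' _; rewrite !mxE (negbTE ne) andbF !mul0r.
rewrite addr0 (bigD1 j) //= [X in _ + X]big1 => [|j' ne]; last first.
  by rewrite !mxE (negbTE ne) andbF mulr0 mul0r.
by rewrite !mxE !eqxx /= !mul1r !addr0.
Qed.

Lemma stab_dimE (K : fieldType) n k (f : 'rV[K]_n) :
  stab_dim (@gnk_bracket K n k) f = (n - \rank (Mf k f))%N.
Proof. by rewrite /stab_dim /stab_mx mxrank_ker. Qed.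

Lemma coef_zero (K : fieldType) n k a b l :
  (3 <= k)%N -> a != 1%N -> (k.-1 <= b)%N -> gnk_coef K n k a b l = 0.
Proof.
move=> hk ha hb; rewrite /gnk_coef.
have -> : (a == 1%N) = false by apply/negbTE.
have -> : (b == 1%N) = false by lia.
have -> : ((2 <= a <= k - 2)%N && (a + b == k)%N) = false by lia.
by rewrite /= !mul0r subrr addr0.
Qed.

Lemma rank_upper (K : fieldType) n k (f : 'rV[K]_n) :
  (3 <= k)%N -> (\rank (Mf k f) <= k.-1)%N.
Proof.
move=> hk.
case: n f => [|n'] f; first by apply: leq_trans (rank_leq_row _) _.
set M := Mf k f.
pose A : 'M[K]_n'.+1 := \matrix_(j, i) if (j < k - 2)%N then M j i else 0.
pose B : 'M[K]_n'.+1 := \matrix_(j, i) if (j < k - 2)%N then 0 else M j i.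
have -> : M = A + B.
  by apply/matrixP => j i; rewrite !mxE; case: ifP; rewrite ?addr0 ?add0r.
apply: leq_trans (mxrank_add _ _) _.
have hA : (\rank A <= k - 2)%N.
  case: (ltnP n'.+1 (k - 2)) => hnk.
    by apply: leq_trans (rank_leq_row _) _; apply: ltnW.
  have -> : A = pid_mx (k - 2) *m M.
    apply/matrixP => j i; rewrite !mxE (bigD1 j) //= big1 ?addr0.
      by rewrite !mxE eqxx /=; case: ifP; rewrite ?mul1r ?mul0r.
    move=> j' ne; rewrite !mxE; case: eqP => [/val_inj E|_]; last by rewrite mul0r.
    by rewrite E eqxx in ne.
  apply: leq_trans (mxrankM_maxl _ _) _.
  by rewrite rank_pid_mx.
have hB : (\rank B <= 1)%N.
  have -> : B = (\col_j B j 0) *m (delta_mx 0 (0 : 'I_n'.+1)).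
    apply/matrixP => j i; rewrite !mxE big_ord1 !mxE /=.
    case: (eqVneq i 0) => [->|ne]; first by rewrite mulr1.
    rewrite mulr0 /=; case: ifP => // hj.
    have := MfE k f i j; rewrite mxE => ->.
    rewrite big1 // => l _; rewrite coef_zero ?mulr0 //; last by lia.
  by apply: leq_trans (mxrankM_maxl _ _) _; apply: rank_leq_col.
lia.
Qed.
Definition gv (n k r : nat) : nat := if (r < k - 2)%N then r else n.-1.
Definition hv (n k s : nat) : nat :=
  if s == 0%N then n.-1 else if (s < k - 2)%N then (k - 2 - s)%N else 0%N.

Ltac coefcase a b := rewrite /gnk_coef;
  case E1: ((a.+1 == 1%N) && _ && _); case E2: ((b.+1 == 1%N) && _ && _);
  case E3: ((2 <= a.+1 <= _)%N && _ && _); try (exfalso; lia).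

Lemma coef_off (K : fieldType) n k (r s : nat) :
  (3 <= k <= n.+1)%N -> (r < k.-1)%N -> (s < k.-1)%N -> r != s ->
  gnk_coef K n.+1 k (hv n k s).+1 (gv n k r).+1 n.+1 = 0.
Proof.
move=> hk hr hs rs.
move Ha: (hv n k s) => a; move Hb: (gv n k r) => b; move: Ha Hb; rewrite /hv /gv.
case: ifP => H1; case: ifP => H2; try case: ifP => H3; move=> Ha Hb; coefcase a b.
all: by rewrite !mul0r subrr addr0.
Qed.

Lemma coef_diag (K : fieldType) n k (s : nat) :
  (3 <= k <= n.+1)%N -> (s < k.-1)%N ->
  exists e, gnk_coef K n.+1 k (hv n k s).+1 (gv n k s).+1 n.+1 = (-1) ^+ e.
Proof.
move=> hk hs.
move Ha: (hv n k s) => a; move Hb: (gv n k s) => b; move: Ha Hb; rewrite /hv /gv.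
case: ifP => H1; case: ifP => H2; try case: ifP => H3; move=> Ha Hb; coefcase a b.
all: first [ by exists 0%N; rewrite /= !mul0r subr0 addr0 expr0
           | by exists 1%N; rewrite /= !mul0r sub0r addr0 expr1
           | by eexists; rewrite /= mul1r subrr add0r ].
Qed.

Lemma rank_lower (K : fieldType) n k : (3 <= k <= n.+1)%N ->
  (k.-1 <= \rank (Mf k (delta_mx ord0 ord_max : 'rV[K]_n.+1)))%N.
Proof.
move=> hk.
set f0 := (delta_mx ord0 ord_max : 'rV[K]_n.+1).
have Mf0 (i j : 'I_n.+1) : Mf k f0 j i = gnk_coef K n.+1 k i.+1 j.+1 n.+1.
  rewrite MfE (bigD1 ord_max) //= big1 ?addr0; first by rewrite !mxE !eqxx mul1r.
  by move=> l ne; rewrite !mxE (negbTE ne) andbF mul0r.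
pose g (r : 'I_k.-1) : 'I_n.+1 := inord (gv n k r).
pose h (r : 'I_k.-1) : 'I_n.+1 := inord (hv n k r).
have gE (r : 'I_k.-1) : (g r : nat) = gv n k r.
  by rewrite inordK //; rewrite /gv; case: ifP; lia.
have hE (r : 'I_k.-1) : (h r : nat) = hv n k r.
  by rewrite inordK //; rewrite /hv; case: ifP; try case: ifP; lia.
set M := Mf k f0.
pose N := mxsub g h M.
have rN : (\rank N <= \rank M)%N.
  have E1 : N = rowsub g 1%:M *m (M *m colsub h 1%:M).
    apply/matrixP => r s; rewrite !mxE (bigD1 (g r)) //= big1 ?addr0.
      rewrite !mxE eqxx mul1r (bigD1 (h s)) //= big1 ?addr0.
        by rewrite !mxE eqxx mulr1.
      by move=> l ne; rewrite !mxE (negbTE ne) mulr0.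
    by move=> l ne; rewrite !mxE eq_sym (negbTE ne) mul0r.
  rewrite E1; apply: leq_trans (mxrankM_maxr _ _) _.
  exact: mxrankM_maxl.
have NE (r s : 'I_k.-1) : N r s = gnk_coef K n.+1 k (hv n k s).+1 (gv n k r).+1 n.+1.
  by rewrite mxE /M Mf0 gE hE.
have ND : N *m diag_mx (\row_s N s s) = 1%:M.
  apply/matrixP => r s; rewrite mul_mx_diag [LHS]mxE [X in _ * X]mxE [RHS]mxE.
  case: (eqVneq r s) => [->|ne].
    rewrite NE; have [e ->] := coef_diag K hk (ltn_ord s).
    by rewrite -expr2 sqrr_sign.
  by rewrite [N r s]NE coef_off ?mul0r.
have := mxrank1 K k.-1; rewrite -ND => <-.
apply: leq_trans (mxrankM_maxl _ _) _.
exact: rN.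
Qed.

Theorem proposition6p7 (K : fieldType) (charK0 : [pchar K] =i pred0)
    (n k : nat) (hn : (3 <= n)%N) (hk_odd : odd k) (hk : (3 <= k <= n)%N) :
  lie_index_is (@gnk_bracket K n k) (n - k + 1).
Proof.
have hk3 : (3 <= k)%N by lia.
split; last first.
  by move=> f; rewrite stab_dimE; have := rank_upper f hk3; lia.
case: n hn hk => [|n'] hn hk; first by lia.
exists (delta_mx ord0 ord_max); rewrite stab_dimE.
have := rank_lower K hk; have := rank_upper (delta_mx ord0 ord_max : 'rV[K]_n'.+1) hk3.
lia.
Qed.
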